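(* Let $S$ be a nonnegative relation in $\mathfrak H$ with $\mathcal W(S)=\{0\}$, and let $H$ be a selfadjoint extension of $S$. Then $\mathcal W(H)=\{0\}$ if and only if $H$ is a nonnegative extremal extension of $S$ (extremal with respect to $0$).
   Context: Linear relations in $\mathfrak H$ are linear subspaces of $\mathfrak H\times\mathfrak H$; $T^*$ adjoint; selfadjoint means $T=T^*$. Numerical range $\mathcal W(T)=\{(\varphi',\varphi):\{\varphi,\varphi'\}\in T,\|\varphi\|=1\}$ (and $\{0\}$ if $\mathrm{dom}\,T=\{0\}$). $S$ nonnegative means $(\varphi',\varphi)\ge0$ for all $\{\varphi,\varphi'\}\in S$. A selfadjoint extension $H$ of $S$ is extremal with respect to $0$ if for every $\{f,f'\}\in H$, $\inf\{(f'-h',f-h):\{h,h'\}\in S\}=0$. *)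

(* Defs.v *)
From mathcomp Require Import all_boot all_order all_algebra.
From mathcomp Require Import complex.
From mathcomp Require Import reals.
Set Implicit Arguments. Unset Strict Implicit. Unset Printing Implicit Defensive.
Import Order.TTheory GRing.Theory Num.Theory.
Local Open Scope ring_scope.
Local Open Scope complex_scope.

Section Hilbert.
Variables (R : realType) (V : lmodType R[i]).

Definition hnorm (ip : V -> V -> R[i]) (x : V) : R := Num.sqrt (complex.Re (ip x x)).

Definition is_hilbert (ip : V -> V -> R[i]) : Prop :=
  [/\ (forall (a : R[i]) (x y z : V), ip (a *: x + y) z = a * ip x z + ip y z),
      (forall x y : V, ip y x = (ip x y)^*),
      (forall x : V, 0 <= ip x x),
      (forall x : V, ip x x = 0 -> x = 0)
    & (forall u : nat -> V,
        (forall e : R, 0 < e -> exists N : nat, forall m n : nat,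
            (N <= m)%N -> (N <= n)%N -> hnorm ip (u m - u n) < e) ->
        exists l : V, forall e : R, 0 < e -> exists N : nat, forall n : nat,
            (N <= n)%N -> hnorm ip (u n - l) < e)].

Definition linrel (T : V * V -> Prop) : Prop :=
  [/\ T (0, 0),
      (forall p q, T p -> T q -> T (p.1 + q.1, p.2 + q.2))
    & (forall (a : R[i]) p, T p -> T (a *: p.1, a *: p.2))].

Definition adjoint (ip : V -> V -> R[i]) (T : V * V -> Prop) : V * V -> Prop :=
  fun q => forall p, T p -> ip p.2 q.1 = ip p.1 q.2.

Definition selfadjoint (ip : V -> V -> R[i]) (T : V * V -> Prop) : Prop :=
  forall p, T p <-> adjoint ip T p.

Definition extension (S H : V * V -> Prop) : Prop := forall p, S p -> H p.

Definition numrange (ip : V -> V -> R[i]) (T : V * V -> Prop) : R[i] -> Prop :=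
  fun c => (exists p, T p /\ hnorm ip p.1 = 1 /\ c = ip p.2 p.1)
           \/ ((forall p, T p -> p.1 = 0) /\ c = 0).

Definition nonnegative (ip : V -> V -> R[i]) (T : V * V -> Prop) : Prop :=
  forall p, T p -> 0 <= ip p.2 p.1.

(* H is extremal w.r.t. 0: for every (f,f') in H,
   inf {(f'-h', f-h) : (h,h') in S} = 0, i.e. 0 is the greatest lower bound
   (in the order of C, where a <= b means b - a is real nonnegative). *)
Definition extremal (ip : V -> V -> R[i]) (S H : V * V -> Prop) : Prop :=
  forall p, H p ->
    (forall q, S q -> 0 <= ip (p.2 - q.2) (p.1 - q.1)) /\
    (forall e : R, 0 < e -> exists q, S q /\ ip (p.2 - q.2) (p.1 - q.1) < e%:C).

End Hilbert.

(* Main.v *)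
Require Import Defs.
From mathcomp Require Import all_boot all_order all_algebra.
From mathcomp Require Import complex.
From mathcomp Require Import reals.
From Stdlib Require Import Classical.
From mathcomp Require Import ring.
Import Order.TTheory GRing.Theory Num.Theory.
Set Implicit Arguments. Unset Strict Implicit.
Local Open Scope ring_scope.
Local Open Scope complex_scope.

Lemma ip_lin (R : realType) (V : lmodType R[i]) (ip : V -> V -> R[i]) :
  is_hilbert ip ->
  [/\ (forall x y z, ip (x + y) z = ip x z + ip y z),
      (forall a x z, ip (a *: x) z = a * ip x z),
      (forall x y z, ip (x - y) z = ip x z - ip y z),
      (forall x y z, ip z (x - y) = ip z x - ip z y)
    & (forall a x z, ip z (a *: x) = a^* * ip z x)].
Proof.
case=> hl hc _ _ _.
have hD x y z : ip (x + y) z = ip x z + ip y z by rewrite -[x]scale1r hl mul1r scale1r.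
have h0 z : ip 0 z = 0.
  by apply: (addrI (ip 0 z)); rewrite -hD !addr0.
have hZ a x z : ip (a *: x) z = a * ip x z by rewrite -[a *: x]addr0 hl h0 addr0.
have hB x y z : ip (x - y) z = ip x z - ip y z.
  by rewrite hD -scaleN1r hZ mulN1r.
split => //.
- by move=> x y z; rewrite hc hB rmorphB /= -!hc.
- by move=> a x z; rewrite hc hZ rmorphM /= -hc.
Qed.

Lemma unit_scale (R : realType) (V : lmodType R[i]) (ip : V -> V -> R[i]) (x : V) :
  is_hilbert ip -> x != 0 -> exists k : R[i], k != 0 /\ hnorm ip (k *: x) = 1.
Proof.
move=> hH; have [_ hZ _ _ hZr] := ip_lin hH.
case: hH => _ _ hpos hdef _ xn0.
have Hp := hpos x.
set a := complex.Re (ip x x).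
have Ea : ip x x = a%:C by move: (ger0_Im Hp); rewrite /a; case: (ip x x) => u v /= ->.
have a0 : 0 < a.
  rewrite lt_def; apply/andP; split; last by rewrite -ler0c -Ea.
  by apply/eqP => a0; move/eqP: xn0; apply; apply: hdef; rewrite Ea a0.
set n := Num.sqrt a.
have n0 : 0 < n by rewrite sqrtr_gt0.
exists (n^-1)%:C; split.
  by apply/eqP => -[] /eqP; rewrite invr_eq0 gt_eqF.
rewrite /hnorm hZ hZr Ea.
have -> : Num.conj (n^-1)%:C = (n^-1)%:C by exact: conjc_real.
rewrite -!rmorphM /=.
have -> : n^-1 * (n^-1 * a) = 1.
  by rewrite -(sqr_sqrtr (ltW a0)) -/n; field; rewrite gt_eqF.
by rewrite sqrtr1.
Qed.

Lemma W_zero (R : realType) (V : lmodType R[i]) (ip : V -> V -> R[i]) T :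
  is_hilbert ip -> linrel T -> (forall c, numrange ip T c -> c = 0) ->
  forall p, T p -> ip p.2 p.1 = 0.
Proof.
move=> hH [T0 TD TZ] hW [f f'] Tp /=.
have [hD hZ hB hBr hZr] := ip_lin hH.
case: (eqVneq f 0) => [->|fn0].
  by rewrite -(scale0r (0 : V)) hZr ?conjc0 ?rmorph0 mul0r.
have [k [kn0 hk]] := unit_scale hH fn0.
have := hW (ip (k *: f') (k *: f)) (or_introl (ex_intro _ (k *: f, k *: f') (conj (TZ k _ Tp) (conj hk erefl)))).
rewrite hZ hZr => /eqP; rewrite !mulf_eq0 (negbTE kn0) ?conjc_eq0 ?conjC_eq0 (negbTE kn0) /=.
by move/eqP.
Qed.

Lemma W_of_zero (R : realType) (V : lmodType R[i]) (ip : V -> V -> R[i]) T :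
  is_hilbert ip -> linrel T -> (forall p, T p -> ip p.2 p.1 = 0) ->
  forall c, numrange ip T c <-> c = 0.
Proof.
move=> hH [T0 TD TZ] hz c; split.
  by case => [[p [Tp [_ ->]]]|[_ ->]] //; exact: hz.
move=> ->.
case: (classic (exists p, T p /\ p.1 <> 0)) => [[[f f'] [Tp /= /eqP fn0]]|hn].
  have [k [_ hk]] := unit_scale hH fn0.
  left; exists (k *: f, k *: f'); split; first exact: TZ k _ Tp.
  by split => //; rewrite (hz _ (TZ k _ Tp)).
right; split => // p Tp; apply: NNPP => hp; apply: hn; by exists p.
Qed.

Lemma Re_mulC (R : realType) (x : R) (y : R[i]) :
  complex.Re (x%:C * y) = x * complex.Re y.
Proof. by case: y => u v /=; rewrite mul0r subr0. Qed.

Theorem proposition8p3 (R : realType) (V : lmodType R[i]) (ip : V -> V -> R[i])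
    (S H : V * V -> Prop) :
  is_hilbert ip -> linrel S -> nonnegative ip S ->
  (forall c, numrange ip S c <-> c = 0) ->
  linrel H -> selfadjoint ip H -> extension S H ->
  ((forall c, numrange ip H c <-> c = 0) <->
   (nonnegative ip H /\ extremal ip S H)).
Proof.
move=> hH hS Snn WS hHl sa ext.
have [hD hZ hB hBr hZr] := ip_lin hH.
have hc : forall x y, ip y x = (ip x y)^* by case: hH.
have zS := W_zero hH hS (fun c h => (WS c).1 h).
split.
  move=> WH; have zH := W_zero hH hHl (fun c h => (WH c).1 h).
  case: (hHl) => H0 HD HZ.
  split; first by move=> p Hp; rewrite zH.
  move=> p Hp; split.
    move=> q Sq.
    have Hq : H (p.1 - q.1, p.2 - q.2).
      by have := HD p _ Hp (HZ (-1) q (ext q Sq)); rewrite /= !scaleN1r.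
    by rewrite (zH _ Hq).
  move=> e e0; exists (0, 0); split; first by case: hS.
  by rewrite /= !subr0 (zH p Hp) ltcE /= eqxx e0.
case=> Hnn Hext.
apply: W_of_zero hH hHl _ => -[f f'] Hp /=.
have [hQ he] := Hext _ Hp; rewrite /= in hQ he.
have Ha : 0 <= ip f' f := Hnn _ Hp.
set a := ip f' f in Ha hQ he *.
set A := complex.Re a.
have Ea : a = A%:C by move: (ger0_Im Ha); rewrite /A; case: (a) => u v /= ->.
have Key : forall q, S q -> ip (f' - q.2) (f - q.1) = a - 2%:R * (complex.Re (ip f q.2))%:C.
  move=> [h h'] Sq /=.
  rewrite hB !hBr (zS _ Sq) /=.
  have -> : ip f' h = ip f h' := (sa (h, h')).1 (ext _ Sq) (f, f') Hp.
  by rewrite (hc f h') subr0 -addrA -opprD addcJ.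
have r0 : forall q, S q -> complex.Re (ip f q.2) = 0.
  move=> q Sq; set r := complex.Re _.
  case: (eqVneq r 0) => // rn0.
  set t := (A + 1) / (2 * r).
  have Sq' : S (t%:C *: q.1, t%:C *: q.2) by case: hS => _ _ SZ; exact: SZ.
  have := hQ _ Sq'; rewrite Key // /= hZr.
  have -> : Num.conj t%:C = t%:C by exact: conjc_real.
  rewrite Re_mulC -/r Ea -[2%:R](rmorph_nat (real_complex R)) -rmorphM -rmorphB ler0c.
  have -> : 2%:R * (t * r) = A + 1 by rewrite /t; field.
  by rewrite opprD addrA subrr add0r oppr_ge0 ler10.
have Key' : forall q, S q -> ip (f' - q.2) (f - q.1) = a.
  by move=> q Sq; rewrite Key // r0 // rmorph0 mulr0 subr0.
have A0 : 0 <= A by rewrite -ler0c -Ea.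
rewrite Ea; have -> : A = 0 => //.
move: A0; rewrite le_eqVlt => /orP [/eqP <- //|Apos].
have [q [Sq hlt]] := he A Apos.
by move: hlt; rewrite Key' // Ea ltcR ltxx.
Qed.
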